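(* Let $\mathcal{M}$ be a finite Markov decision process with state set $S$, action set $A$, transition function $P$, and a set of accepting states $B \subseteq S$. Let $\gamma_B:(0,1)\to(0,1)$ be a function of $\gamma$ satisfying $$\lim_{\gamma \to 1^-} \frac{1-\gamma}{1-\gamma_B(\gamma)} = 0.$$ For $\gamma\in(0,1)$ define $R_B(s) = 1-\gamma_B$ if $s\in B$ and $0$ otherwise, and $\Gamma_B(s) = \gamma_B$ if $s\in B$ and $\gamma$ otherwise (with $\gamma_B=\gamma_B(\gamma)$). For a path $\sigma$ let $$G_t(\sigma) = \sum_{i=0}^{\infty} R_B(\sigma[t+i]) \prod_{j=0}^{i-1} \Gamma_B(\sigma[t+j]),$$ with the empty product equal to $1$, and for a memoryless policy $\pi$ let $v^\gamma_\pi(s)$ be the expected value of $G_0(\sigma)$ over random paths of the Markov chain $\mathcal{M}_\pi$ induced by $\pi$ started at $s$. Let $B_\pi$ be the set of states $s\in B$ that belong to some bottom strongly connected component of $\mathcal{M}_\pi$. Then for every memoryless policy $\pi$ and every $s\in B_\pi$, $$\lim_{\gamma\to1^-} v^\gamma_\pi(s) = 1.$$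
   Context: A finite MDP consists of a finite state set $S$, a finite action set $A$, for each state $s$ a nonempty set $A(s)\subseteq A$ of enabled actions, and transition probabilities $P:S\times A\times S\to[0,1]$ with $\sum_{s'}P(s,a,s')=1$ for $a\in A(s)$. A memoryless policy is a map $\pi:S\to A$ with $\pi(s)\in A(s)$; it induces the Markov chain $\mathcal{M}_\pi$ on $S$ with transition probabilities $P_\pi(s,s')=P(s,\pi(s),s')$. A bottom strongly connected component (BSCC) of a Markov chain is a strongly connected component of its transition graph (edges where the transition probability is positive) with no outgoing transitions. *)

(* Defs.v *)
From HB Require Import structures.
From mathcomp Require Import all_boot all_order all_algebra.
From mathcomp Require Import all_classical all_reals all_analysis.
Set Implicit Arguments. Unset Strict Implicit. Unset Printing Implicit Defensive.
Import Order.TTheory GRing.Theory Num.Theory.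
Local Open Scope ring_scope.

Section MDP.
Variables (R : realType) (S A : finType).

Definition is_mdp (en : S -> {set A}) (P : S -> A -> S -> R) : Prop :=
  (forall s, en s != finset.set0) /\
  (forall s a s', 0 <= P s a s') /\
  (forall s a, a \in en s -> \sum_(s' : S) P s a s' = 1).

Definition is_policy (en : S -> {set A}) (pi : S -> A) : Prop :=
  forall s, pi s \in en s.

Definition chain_edge (P : S -> A -> S -> R) (pi : S -> A) : rel S :=
  fun x y => 0 < P x (pi x) y.

Definition is_scc (e : rel S) (C : {set S}) : Prop :=
  exists x, C = [set y | connect e x y && connect e y x].

Definition is_bscc (e : rel S) (C : {set S}) : Prop :=
  is_scc e C /\ (forall x y, x \in C -> e x y -> y \in C).

Definition B_pi (P : S -> A -> S -> R) (pi : S -> A) (B : {set S}) : {set S} :=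
  [set s in B | `[< exists C, is_bscc (chain_edge P pi) C /\ s \in C >]].

Definition RB (B : {set S}) (gB : R) (s : S) : R :=
  if s \in B then 1 - gB else 0.
Definition GammaB (B : {set S}) (g gB : R) (s : S) : R :=
  if s \in B then gB else g.

Definition pst n (p : {ffun 'I_n.+1 -> S}) (k : nat) : S := p (inord k).

(* Expected value of the i-th summand of G_0 over random paths of M_pi from s:
   E[ R_B(sigma[i]) * prod_{j<i} Gamma_B(sigma[j]) ], computed as the sum over
   all finite path prefixes sigma[0..i] starting at s of their probability. *)
Definition exp_term (P : S -> A -> S -> R) (pi : S -> A) (B : {set S})
    (g gB : R) (s : S) (i : nat) : R :=
  \sum_(p : {ffun 'I_i.+1 -> S} | pst p 0 == s)
     ((\prod_(j < i) P (pst p j) (pi (pst p j)) (pst p j.+1)) *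
      ((\prod_(j < i) GammaB B g gB (pst p j)) * RB B gB (pst p i))).

(* v^gamma_pi(s) = E[G_0] = sum_i E[i-th summand] (nonnegative terms, so the
   expectation of the series is the series of expectations). *)
Definition value (P : S -> A -> S -> R) (pi : S -> A) (B : {set S})
    (g gB : R) (s : S) : R :=
  limn (fun n => \sum_(0 <= i < n) exp_term P pi B g gB s i).

End MDP.

(* Main.v *)
Require Import Defs.
From HB Require Import structures.
From mathcomp Require Import all_boot all_order all_algebra.
From mathcomp Require Import all_classical all_reals all_analysis.
From mathcomp Require Import ring lra.
Import Order.TTheory GRing.Theory Num.Theory numFieldNormedType.Exports.
Local Open Scope ring_scope.
Local Open Scope classical_set_scope.

Section Rec.
Variables (R : realType) (S A : finType) (P : S -> A -> S -> R) (pi : S -> A)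
  (B : {set S}) (g gB : R).

Local Notation Q x y := (P x (pi x) y).
Local Notation et := (exp_term P pi B g gB).

Lemma exp_term0 s : et s 0 = RB B gB s.
Proof.
rewrite /exp_term (eq_bigl (pred1 [ffun => s])); last first.
  move=> p /=; apply/eqP/eqP => [<-|->]; last by rewrite /pst ffunE.
  by apply/ffunP => i; rewrite ffunE /pst ord1; congr (p _); apply: val_inj; rewrite /= inordK.
rewrite big_pred1_eq !big_ord0 !mul1r /pst ffunE //.
Qed.

Definition hcons i (s : S) (q : {ffun 'I_i.+1 -> S}) : {ffun 'I_i.+2 -> S} :=
  [ffun k : 'I_i.+2 => if (k : nat) is k'.+1 then q (inord k') else s].
Definition htail i (p : {ffun 'I_i.+2 -> S}) : {ffun 'I_i.+1 -> S} :=
  [ffun k : 'I_i.+1 => p (inord k.+1)].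

Lemma pst_h0 i s q : pst (@hcons i s q) 0 = s.
Proof. by rewrite /pst /hcons ffunE inordK. Qed.

Lemma pst_hS i s q j : (j < i.+1)%N -> pst (@hcons i s q) j.+1 = pst q j.
Proof. by move=> hj; rewrite /pst /hcons ffunE inordK. Qed.

Lemma exp_termS s i :
  et s i.+1 = GammaB B g gB s * \sum_y Q s y * et y i.
Proof.
rewrite /exp_term (reindex_onto (@hcons i s) (@htail i)); last first.
  move=> p /eqP hp; apply/ffunP => k; rewrite /hcons /htail ffunE.
  case: k => [[|k] hk] /=.
    by rewrite -hp /pst; congr (p _); apply: val_inj; rewrite /= inordK.
  rewrite ffunE; congr (p _); apply: val_inj.
  by rewrite /= !inordK.
rewrite (eq_bigl (fun _ => true)); last first.
  move=> q; rewrite pst_h0 eqxx /=; apply/eqP/ffunP => k.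
  rewrite /htail /hcons !ffunE inordK /=; last by rewrite ltnS ltn_ord.
  by congr (q _); apply: val_inj; rewrite /= inordK.
set T := fun q : {ffun 'I_i.+1 -> S} => \prod_(j < i) Q (pst q j) (pst q j.+1) *
       (\prod_(j < i) GammaB B g gB (pst q j) * RB B gB (pst q i)).
rewrite (eq_bigr (fun q => GammaB B g gB s * (Q s (pst q 0) * T q))); last first.
  move=> q _; rewrite /T big_ord_recl [X in _ * (X * _)]big_ord_recl /=.
  have e1 : forall j : 'I_i, pst (hcons _ s q) (bump 0 j) = pst q j.
    by move=> j; rewrite /bump /= ?add1n pst_hS // ltnS ltnW.
  have e2 : forall j : 'I_i, pst (hcons _ s q) (bump 0 j).+1 = pst q j.+1.
    by move=> j; rewrite /bump /= ?add1n pst_hS //; exact: ltn_ord j.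
  under eq_bigr do rewrite e1 e2.
  under [X in _ * (_ * X * _) = _]eq_bigr do rewrite e1.
  rewrite pst_h0 !pst_hS //.
  ring.
rewrite -big_distrr /=; congr (_ * _).
rewrite (partition_big (fun q : {ffun 'I_i.+1 -> S} => pst q 0) predT) //=.
apply: eq_bigr => y _; rewrite big_distrr /=.
by apply: eq_bigr => q /eqP ->.
Qed.
End Rec.

Section Bounds.
Variables (R : realType) (S A : finType) (P : S -> A -> S -> R) (pi : S -> A)
  (B : {set S}) (g gB : R).
Hypothesis P0 : forall x a y, 0 <= P x a y.
Hypothesis P1 : forall x, \sum_y P x (pi x) y = 1.
Hypothesis g01 : 0 < g < 1.
Hypothesis gB01 : 0 < gB < 1.
Let g0 : 0 < g. Proof. by case/andP: g01. Qed.
Let g1 : g < 1. Proof. by case/andP: g01. Qed.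
Let gB0 : 0 < gB. Proof. by case/andP: gB01. Qed.
Let gB1 : gB < 1. Proof. by case/andP: gB01. Qed.

Local Notation Q x y := (P x (pi x) y).
Local Notation et := (exp_term P pi B g gB).
Definition V n x := \sum_(0 <= i < n) et x i.

Lemma RB_ge0 x : 0 <= RB B gB x.
Proof. by rewrite /RB; case: ifP => _; have := g0; have := g1; have := gB0; have := gB1; lra. Qed.
Lemma Gam_ge0 x : 0 <= GammaB B g gB x.
Proof. by rewrite /GammaB; case: ifP => _; have := g0; have := g1; have := gB0; have := gB1; lra. Qed.
Lemma RBGam x : RB B gB x + GammaB B g gB x <= 1.
Proof. by rewrite /RB /GammaB; case: ifP => _; have := g0; have := g1; have := gB0; have := gB1; lra. Qed.
Lemma Gam_le x : GammaB B g gB x <= Num.max g gB.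
Proof. by rewrite /GammaB; case: ifP => _; rewrite le_max lexx ?orbT. Qed.

Lemma et_ge0 x i : 0 <= et x i.
Proof.
apply: sumr_ge0 => p _; apply: mulr_ge0; first by apply: prodr_ge0 => j _.
by apply: mulr_ge0; [apply: prodr_ge0 => j _; exact: Gam_ge0| exact: RB_ge0].
Qed.

Lemma V0 x : V 0 x = 0.
Proof. by rewrite /V big_geq. Qed.

Lemma VS n x : V n.+1 x = RB B gB x + GammaB B g gB x * \sum_y Q x y * V n y.
Proof.
rewrite /V big_nat_recl // exp_term0; congr (_ + _).
under eq_bigr do rewrite exp_termS.
rewrite -big_distrr /=; congr (_ * _).
rewrite exchange_big /=; apply: eq_bigr => y _.
by rewrite big_distrr.
Qed.

Lemma V_le1 n x : V n x <= 1.
Proof.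
elim: n x => [|n IH] x; first by rewrite V0 ler01.
rewrite VS; apply: le_trans (RBGam x); rewrite lerD2l.
rewrite -[X in _ <= X]mulr1; apply: ler_wpM2l; first exact: Gam_ge0.
rewrite -(P1 x); apply: ler_sum => y _; rewrite -[X in _ <= X]mulr1.
by apply: ler_wpM2l => //; exact: IH.
Qed.

Lemma V_incr x : {homo (fun n => V n x) : n m / (n <= m)%N >-> n <= m}.
Proof.
apply/nondecreasing_seqP => n; rewrite /V big_nat_recr //= lerDl.
exact: et_ge0.
Qed.

Lemma V_cvg x : cvgn (fun n => V n x).
Proof.
apply: cvgP (nondecreasing_cvgn (V_incr x) _).
by exists 1 => _ [n _ <-]; exact: V_le1.
Qed.

Lemma valueE x : value P pi B g gB x = limn (fun n => V n x).
Proof. by []. Qed.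

Lemma value_le1 x : value P pi B g gB x <= 1.
Proof.
rewrite valueE; apply: limr_le; first exact: V_cvg.
by apply: nearW => n; exact: V_le1.
Qed.

Lemma V_le_value n x : V n x <= value P pi B g gB x.
Proof. rewrite valueE; exact: (nondecreasing_cvgn_le (V_incr x) (V_cvg x)). Qed.

Variable C : {set S}.
Hypothesis Cclosed : forall x y, x \in C -> 0 < Q x y -> y \in C.
Variable L : S -> R.
Hypothesis L1 : forall x, L x <= 1.
Hypothesis Lsub : forall x, x \in C ->
  L x <= RB B gB x + GammaB B g gB x * \sum_y Q x y * L y.

Let th := Num.max g gB.

Lemma LV_bound n x : x \in C -> L x - V n x <= th ^+ n.
Proof.
elim: n x => [|n IH] x xC; first by rewrite V0 subr0 expr0.
rewrite VS.
have h1 := Lsub x xC.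
set G := GammaB B g gB x in h1 *.
have e : G * (\sum_y Q x y * (L y - V n y)) =
   G * (\sum_y Q x y * L y) - G * (\sum_y Q x y * V n y).
  by rewrite -mulrBr -sumrB; congr (_ * _); apply: eq_bigr => y _; rewrite mulrBr.
suff h2 : G * (\sum_y Q x y * (L y - V n y)) <= th ^+ n.+1 by lra.
have hs : \sum_y Q x y * (L y - V n y) <= th ^+ n.
  rewrite -[X in _ <= X]mul1r -(P1 x) big_distrl /=.
  apply: ler_sum => y _.
  have [yC|yC] := boolP (y \in C).
    by apply: ler_wpM2l => //; exact: IH.
  have -> : Q x y = 0.
    apply/eqP; rewrite eq_le P0 andbT leNgt; apply/negP => h.
    by move: yC; rewrite (Cclosed x y xC h).
  by rewrite !mul0r.
apply: (le_trans (ler_wpM2l (Gam_ge0 x) hs)).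
rewrite exprS; apply: ler_wpM2r; last exact: Gam_le.
by apply: exprn_ge0; rewrite le_max ltW.
Qed.

Lemma L_le_value x : x \in C -> L x <= value P pi B g gB x.
Proof.
move=> xC; rewrite -subr_le0.
have th1 : `|th| < 1.
  by rewrite ger0_norm ?le_max ?ltW // gt_max g1 gB1.
have := cvg_expr th1 => hc.
rewrite -(cvg_lim _ hc) //.
apply: limr_ge; first by apply: cvgP hc.
apply: nearW => n /=.
have := LV_bound n x xC; have := V_le_value n x; lra.
Qed.
End Bounds.

Section Sub.
Variables (R : realType) (S A : finType) (P : S -> A -> S -> R) (pi : S -> A)
  (B : {set S}) (g gB : R).
Hypothesis P0 : forall x a y, 0 <= P x a y.
Hypothesis P1 : forall x, \sum_y P x (pi x) y = 1.
Hypothesis g01 : 0 < g < 1.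
Hypothesis gB01 : 0 < gB < 1.
Local Notation Q x y := (P x (pi x) y).
Variable C : {set S}.
Hypothesis Cclosed : forall x y, x \in C -> 0 < Q x y -> y \in C.
Variables (w : S -> R) (Z : R).
Hypothesis w0 : forall x, 0 <= w x.
Hypothesis w1 : forall x, w x <= 1.
Hypothesis Z0 : 0 <= Z.
Hypothesis wstep : forall x, x \in C -> x \notin B ->
  (exists y0, 2 * w x <= Q x y0 * w y0) /\ 1 <= Z * w x.

Let K := Z / (1 - gB).
Let h x := K + Z * (1 - w x).
Let L x := 1 - (1 - g) * h x.

Lemma value_lb s : s \in C -> 1 - (1 - g) * (K + Z) <= value P pi B g gB s.
Proof.
have g0 : 0 < g by case/andP: g01.
have g1 : g < 1 by case/andP: g01.
have gB0 : 0 < gB by case/andP: gB01.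
have gB1 : gB < 1 by case/andP: gB01.
have eK : K * (1 - gB) = Z by rewrite /K mulfVK // subr_eq0 gt_eqF.
have K0 : 0 <= K by rewrite /K divr_ge0 // subr_ge0 ltW.
have hL1 : forall x, L x <= 1.
  move=> x; rewrite /L /h lerBlDr lerDl; apply: mulr_ge0; first by rewrite subr_ge0 ltW.
  apply: addr_ge0 => //; apply: mulr_ge0 => //; rewrite subr_ge0; exact: w1.
suff hLsub : forall x, x \in C -> L x <= RB B gB x + GammaB B g gB x * \sum_y Q x y * L y.
  move=> sC; apply: le_trans (@L_le_value _ _ _ P pi B g gB P0 P1 g01 gB01 C Cclosed L hL1 hLsub s sC).
  rewrite /L /h lerD2l lerN2; apply: ler_wpM2l; first by rewrite subr_ge0 ltW.
  rewrite lerD2l ler_piMr // lerBlDr lerDl; exact: w0.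
move=> x xC.
set W := \sum_y Q x y * w y.
have W0 : 0 <= W by apply: sumr_ge0 => y _; apply: mulr_ge0.
have W1 : W <= 1.
  rewrite -(P1 x); apply: ler_sum => y _; rewrite -[X in _ <= X]mulr1.
  by apply: ler_wpM2l.
have eL : \sum_y Q x y * L y = 1 - (1 - g) * (K + Z) + (1 - g) * Z * W.
  rewrite (eq_bigr (fun y => Q x y * (1 - (1 - g) * (K + Z)) + ((1 - g) * Z) * (Q x y * w y))).
    by rewrite big_split /= -big_distrl -big_distrr /= P1 mul1r.
  by move=> y _; rewrite /L /h; ring.
rewrite eL /RB /GammaB /L /h; have wx0 := w0 x; have wx1 := w1 x.
case: ifP => xB.
  have : 0 <= (1 - g) * (Z * (1 - gB) + Z * (1 - w x) + gB * Z * W).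
    apply: mulr_ge0; first by rewrite subr_ge0 ltW.
    apply: addr_ge0; first apply: addr_ge0.
    - by apply: mulr_ge0 => //; rewrite subr_ge0 ltW.
    - by apply: mulr_ge0 => //; rewrite subr_ge0.
    - by apply: mulr_ge0 => //; apply: mulr_ge0 => //; exact: ltW.
  have e2 : (1 - g) * (K * (1 - gB)) = (1 - g) * Z by rewrite eK.
  move=> H; nra.
have [[y0 hy0] hZ] := wstep x xC (negbT xB).
have hW : 2 * w x <= W.
  apply: le_trans hy0 _; rewrite /W (bigD1 y0) //= lerDl.
  by apply: sumr_ge0 => y _; apply: mulr_ge0.
have hZW : 0 <= Z * (W - w x) - 1.
  rewrite subr_ge0; apply: le_trans hZ _; apply: ler_wpM2l => //; lra.
have : 0 <= (1 - g) * ((1 - g) * (K + Z * (1 - W)) + (Z * (W - w x) - 1)).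
  apply: mulr_ge0; first by rewrite subr_ge0 ltW.
  apply: addr_ge0 => //.
  apply: mulr_ge0; first by rewrite subr_ge0 ltW.
  by apply: addr_ge0 => //; apply: mulr_ge0 => //; rewrite subr_ge0.
nra.
Qed.
End Sub.

Section Comb.
Variables (R : realType) (S A : finType) (P : S -> A -> S -> R) (pi : S -> A)
  (B : {set S}).
Hypothesis P0 : forall x a y, 0 <= P x a y.
Hypothesis P1 : forall x, \sum_y P x (pi x) y = 1.
Local Notation Q x y := (P x (pi x) y).
Local Notation e := (chain_edge P pi).

Fixpoint reachB (k : nat) (x : S) : bool :=
  match k with
  | 0 => x \in B
  | k'.+1 => reachB k' x || [exists y, e x y && reachB k' y]
  end.

Lemma reach_path {x p} : path e x p -> last x p \in B -> exists k, reachB k x.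
Proof.
elim: p x => [|z p IH] x /=; first by move=> _ hB; exists 0.
case/andP => exz hp hB; have [k hk] := IH z hp hB.
exists k.+1 => /=; apply/orP; right; apply/existsP; exists z; by rewrite exz hk.
Qed.

Variable C : {set S}.
Hypothesis bC : is_bscc e C.
Variable s : S.
Hypothesis sC : s \in C.
Hypothesis sB : s \in B.

Lemma Cclosed {x y} : x \in C -> 0 < Q x y -> y \in C.
Proof. by case: bC => _ h; apply: h. Qed.

Lemma C_reach {x} : x \in C -> exists k, reachB k x.
Proof.
case: bC => [[x0 eC] _]; move: sC; rewrite eC !inE => /andP[h1 _] /andP[_ h2].
have /connectP [p hp hl] : connect e x s by apply: connect_trans h2 h1.
by apply: (reach_path hp); rewrite -hl.
Qed.

Lemma d_ex : exists d : S -> nat, forall x, x \in C ->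
  reachB (d x) x /\ forall k, reachB k x -> (d x <= k)%N.
Proof.
have : forall x, exists k, x \in C -> reachB k x /\ forall k', reachB k' x -> (k <= k')%N.
  move=> x; have [xC|xC] := boolP (x \in C); last by exists 0.
  have hex := C_reach xC.
  exists (ex_minn hex) => _; case: ex_minnP => m hm hmin; split => //.
case/choice => d hd; exists d => x xC; exact: hd.
Qed.

Definition pmin : R := \big[Num.min/1]_(xy : S * S | 0 < Q xy.1 xy.2) Q xy.1 xy.2.

Lemma pmin_gt0 : 0 < pmin.
Proof. by apply: (big_ind (fun v => 0 < v)) => // a b ha hb; rewrite lt_min ha hb. Qed.

Lemma pmin_le1 : pmin <= 1.
Proof.
apply: (big_ind (fun v => v <= 1)); [done| |].
  by move=> a b ha hb; rewrite ge_min ha.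
by move=> xy _; rewrite -(P1 xy.1) (bigD1 xy.2) //= lerDl sumr_ge0.
Qed.

Lemma pmin_le x y : 0 < Q x y -> pmin <= Q x y.
Proof. by move=> h; rewrite /pmin (bigD1 (x, y)) //= ge_min lexx. Qed.

Lemma comb_ex : exists (w : S -> R) (Z : R),
  [/\ forall x, 0 <= w x, forall x, w x <= 1, 0 <= Z &
      forall x, x \in C -> x \notin B ->
      (exists y0, 2 * w x <= Q x y0 * w y0) /\ 1 <= Z * w x].
Proof.
have [d hd] := d_ex.
set c := pmin / 2.
have c0 : 0 < c by rewrite divr_gt0 // pmin_gt0.
have c1 : c <= 1 by have := pmin_le1; rewrite /c; lra.
set N := (\max_(x in C) d x)%N.
exists (fun x => c ^+ d x), (c ^+ N)^-1; split.
- by move=> x; rewrite exprn_ge0 // ltW.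
- by move=> x; rewrite exprn_ile1 // ltW.
- by rewrite invr_ge0 exprn_ge0 // ltW.
move=> x xC xB; have [hr hmin] := hd x xC.
split; last first.
  rewrite mulrC ler_pdivlMr ?exprn_gt0 // mul1r.
  by apply: ler_wiXn2l => //; [exact: ltW | exact: leq_bigmax_cond].
move: hr hmin; case Edx: (d x) => [|k] /=; first by rewrite (negbTE xB).
case/orP => [hk hmin|]; first by have := hmin _ hk; rewrite ltnn.
case/existsP => y /andP[exy hy] _; exists y.
have yC : y \in C by exact: Cclosed exy.
have hdy : (d y <= k)%N by have [_ ] := hd y yC; apply.
rewrite exprS mulrA.
apply: ler_pM.
- by rewrite mulr_ge0 // ltW.
- by rewrite exprn_ge0 // ltW.
- by rewrite /c mulrC divfK ?pnatr_eq0 //; exact: pmin_le.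
- by apply: ler_wiXn2l => //; exact: ltW.
Qed.
End Comb.

Theorem lemma3 (R : realType) (S A : finType) (en : S -> {set A})
    (P : S -> A -> S -> R) (B : {set S}) (gammaB : R -> R) :
  is_mdp en P ->
  (forall g : R, 0 < g < 1 -> 0 < gammaB g < 1) ->
  (1 - g) / (1 - gammaB g) @[g --> (1 : R)^'-] --> (0 : R) ->
  forall pi : S -> A, is_policy en pi ->
  forall s : S, s \in B_pi P pi B ->
  value P pi B g (gammaB g) s @[g --> (1 : R)^'-] --> (1 : R).
Proof.
move=> [_ [P0 Pen]] hgB hlim pi hpi s hs.
have P1 : forall x, \sum_y P x (pi x) y = 1 by move=> x; exact: Pen.
move: hs; rewrite inE => /andP[sB /asboolP [C [bC sC]]].
have Ccl : forall x y, x \in C -> 0 < P x (pi x) y -> y \in C.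
  by case: bC => _ h x y; exact: h.
have [w [Z [w0 w1 Z0 wstep]]] := @comb_ex _ _ _ P pi B P0 P1 C bC s sC sB.
apply: (@squeeze_cvgr _ _ _ _ (fun g => 1 - Z * ((1 - g) / (1 - gammaB g) + (1 - g)))
   (fun _ => 1)).
- near=> g.
  have g01 : 0 < g < 1.
    apply/andP; split; [near: g; exact: nbhs_left_gt | near: g; exact: nbhs_left_lt].
  have gB01 := hgB g g01.
  apply/andP; split; last exact: (@value_le1 _ _ _ P pi B g (gammaB g) P0 P1 g01 gB01 s).
  have := @value_lb _ _ _ P pi B g (gammaB g) P0 P1 g01 gB01 C Ccl w Z w0 w1 Z0 wstep s sC.
  congr (_ <= _); rewrite /=; ring.
- have h1g : (1 - g) @[g --> (1 : R)^'-] --> (0 : R).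
    apply: cvg_at_left_filter; rewrite -(subrr (1 : R)).
    apply: cvgB; [exact: cvg_cst | exact: cvg_id].
  rewrite -[X in _ --> X](subr0 (1 : R)); apply: cvgB; first exact: cvg_cst.
  rewrite -(mulr0 Z); apply: cvgM; first exact: cvg_cst.
  rewrite -(addr0 (0 : R)); exact: cvgD.
- exact: cvg_cst.
Unshelve. all: by end_near.
Qed.
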